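(* Assume $\mu<1$. Then for every integer $r\ge1$, $$\mathbf{P}[M=r]\le\frac{p_r}{1-\mu}.$$ In particular $\mathbf{E}[M]<\infty$.
   Context: Let $p=(p_0,p_1,p_2,\dots)$ be a probability distribution on the nonnegative integers with mean $\mu=\sum_k kp_k\in(0,\infty)$, and let $\tau(p)$ be a Galton–Watson tree with offspring distribution $p$: it starts with a single root at generation $0$, and every vertex independently has $k$ children with probability $p_k$. The out-degree of a vertex is its number of children. $M_n$ denotes the maximal out-degree among the vertices of generation $n$ (with $M_n=0$ if generation $n$ is empty), and $M=\sup_{n\ge0}M_n$ is the global maximal out-degree. *)

(* Defs.v *)
From Stdlib Require Import Reals Lra List.
Open Scope R_scope.

(* Finite rooted plane (ordered) trees: a vertex is the list of its
   children subtrees; its out-degree is the length of that list. *)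
Inductive tree : Type := Node : list tree -> tree.

(* Galton--Watson law of a finite plane tree:
   P[tau(p) = t] = prod over vertices v of t of p_(outdeg v). *)
Fixpoint gw_weight (p : nat -> R) (t : tree) : R :=
  match t with
  | Node ts =>
      p (length ts) *
      (fix wl (l : list tree) : R :=
         match l with
         | nil => 1
         | t' :: l' => gw_weight p t' * wl l'
         end) ts
  end.

Fixpoint maxdeg (t : tree) : nat :=
  match t with
  | Node ts =>
      Nat.max (length ts)
        ((fix ml (l : list tree) : nat :=
            match l with
            | nil => 0%nat
            | t' :: l' => Nat.max (maxdeg t') (ml l')
            end) ts)
  end.

Definition offspring_dist (p : nat -> R) (mu : R) : Prop :=
  (forall k, 0 <= p k) /\ infinite_sum p 1 /\
  infinite_sum (fun k => INR k * p k) mu.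

Definition lsum (f : tree -> R) (l : list tree) : R :=
  fold_right (fun t s => f t + s) 0 l.

(* Countable sum of the nonnegative function f over the set A of finite
   trees, as the supremum of finite partial sums: is_tree_sum f A s
   means sum_{t in A} f t = s (in particular it is finite). *)
Definition is_tree_sum (f : tree -> R) (A : tree -> Prop) (s : R) : Prop :=
  is_lub (fun x => exists l, NoDup l /\ (forall t, In t l -> A t) /\
                             x = lsum f l) s.

(* P[M = r] for the (a.s. finite) GW tree *)
Definition prob_M_eq (p : nat -> R) (r : nat) (x : R) : Prop :=
  is_tree_sum (gw_weight p) (fun t => maxdeg t = r) x.

Definition expect_M (p : nat -> R) (x : R) : Prop :=
  is_tree_sum (fun t => INR (maxdeg t) * gw_weight p t) (fun _ => True) x.

(* Main.v *)
Require Import Defs.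
From Stdlib Require Import Reals Lra Lia List Arith.
Open Scope R_scope.

Definition fw (p : nat -> R) (F : list tree) : R :=
  fold_right (fun t acc => gw_weight p t * acc) 1 F.

Lemma gw_node p ts : gw_weight p (Node ts) = p (length ts) * fw p ts.
Proof. simpl; f_equal; induction ts; simpl; try congruence. Qed.

Fixpoint V (g : nat -> R) (t : tree) : R :=
  match t with Node ts => g (length ts) +
    (fix vl l := match l with nil => 0 | t' :: l' => V g t' + vl l' end) ts end.

Definition VF g (F : list tree) : R := fold_right (fun t acc => V g t + acc) 0 F.

Lemma V_node g ts : V g (Node ts) = g (length ts) + VF g ts.
Proof. simpl; f_equal; induction ts; simpl; try congruence. Qed.

Fixpoint szt (t : tree) : nat :=
  match t with Node ts => S ((fix f l := match l with nil => 0%nat | t'::l' => (szt t' + f l')%nat end) ts) end.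
Definition szF (F : list tree) : nat := fold_right (fun t acc => (szt t + acc)%nat) 0%nat F.
Lemma szt_node ts : szt (Node ts) = S (szF ts).
Proof. simpl; f_equal; induction ts; simpl; try congruence. Qed.

Lemma fw_app p a b : fw p (a ++ b) = fw p a * fw p b.
Proof. induction a; simpl; [ring| rewrite IHa; ring]. Qed.
Lemma VF_app g a b : VF g (a ++ b) = VF g a + VF g b.
Proof. induction a; simpl; [ring| rewrite IHa; ring]. Qed.
Lemma szF_app a b : szF (a ++ b) = (szF a + szF b)%nat.
Proof. induction a; simpl; [lia| rewrite IHa; lia]. Qed.

Definition fd (F : list tree) : nat := match F with Node ts :: _ => length ts | nil => 0%nat end.
Definition T (F : list tree) : list tree := match F with Node ts :: rest => ts ++ rest | nil => nil end.

Lemma fw_T p F : F <> nil -> fw p F = p (fd F) * fw p (T F).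
Proof. destruct F as [|[ts] r]; [congruence|]. intros _. change (gw_weight p (Node ts) * fw p r = p (length ts) * fw p (ts ++ r)). rewrite gw_node, fw_app. ring. Qed.
Lemma VF_T g F : F <> nil -> VF g F = g (fd F) + VF g (T F).
Proof. destruct F as [|[ts] r]; [congruence|]. intros _. change (V g (Node ts) + VF g r = g (length ts) + VF g (ts ++ r)). rewrite V_node, VF_app. ring. Qed.
Lemma sz_T F : F <> nil -> szF F = S (szF (T F)).
Proof. destruct F as [|[ts] r]; [congruence|]. intros _. change ((szt (Node ts) + szF r)%nat = S (szF (ts ++ r))). rewrite szt_node, szF_app. lia. Qed.
Lemma len_T F : F <> nil -> (length (T F) = fd F + length F - 1)%nat.
Proof. destruct F as [|[ts] r]; [congruence|]. intros _. simpl. rewrite length_app. lia. Qed.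
Lemma T_inj F G : F <> nil -> G <> nil -> fd F = fd G -> length F = length G -> T F = T G -> F = G.
Proof.
  destruct F as [|[ts] r]; [congruence|]. destruct G as [|[ts'] r']; [congruence|].
  simpl. intros _ _ Hd Hl Ha.
  assert (ts = ts'). { assert (E := f_equal (firstn (length ts)) Ha).
    rewrite firstn_app, Nat.sub_diag, firstn_all in E. rewrite Hd, firstn_app, Nat.sub_diag, firstn_all in E.
    simpl in E. rewrite !app_nil_r in E. exact E. }
  subst. apply app_inv_head in Ha. subst. reflexivity.
Qed.

Definition SF (h : list tree -> R) (S : list (list tree)) : R :=
  fold_right (fun F acc => h F + acc) 0 S.

Lemma SF_ext h h' l : (forall F, In F l -> h F = h' F) -> SF h l = SF h' l.
Proof. induction l; simpl; intros H; [reflexivity|]. rewrite H, IHl; auto. Qed.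
Lemma SF_scal a h l : SF (fun F => a * h F) l = a * SF h l.
Proof. induction l; simpl; [ring|rewrite IHl; ring]. Qed.
Lemma SF_plus h h' l : SF (fun F => h F + h' F) l = SF h l + SF h' l.
Proof. induction l; simpl; [ring|rewrite IHl; ring]. Qed.
Lemma SF_map h f l : SF h (map f l) = SF (fun F => h (f F)) l.
Proof. induction l; simpl; [ring|rewrite IHl; ring]. Qed.

Lemma sum_ind0 x j K : (K < j)%nat -> sum_f_R0 (fun d => if Nat.eqb j d then x else 0) K = 0.
Proof.
  induction K; intros H; simpl.
  - destruct (Nat.eqb_spec j 0); [lia|reflexivity].
  - rewrite IHK by lia. destruct (Nat.eqb_spec j (S K)); [lia|ring].
Qed.
Lemma sum_ind x j K : (j <= K)%nat -> sum_f_R0 (fun d => if Nat.eqb j d then x else 0) K = x.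
Proof.
  induction K; intros H; simpl.
  - destruct (Nat.eqb_spec j 0); [reflexivity|lia].
  - destruct (Nat.eq_dec j (S K)).
    + subst. rewrite sum_ind0 by lia. rewrite Nat.eqb_refl. ring.
    + rewrite IHK by lia. destruct (Nat.eqb_spec j (S K)); [lia|ring].
Qed.
Lemma sum_zero K : sum_f_R0 (fun _ => 0) K = 0.
Proof. induction K; simpl; [reflexivity| rewrite IHK; ring]. Qed.

Lemma decomp h S K : (forall F, In F S -> (fd F <= K)%nat) ->
  SF h S = sum_f_R0 (fun d => SF h (filter (fun F => Nat.eqb (fd F) d) S)) K.
Proof.
  induction S as [|a S IH]; intros H; simpl.
  - rewrite sum_zero. reflexivity.
  - rewrite (sum_eq _ (fun d => (if Nat.eqb (fd a) d then h a else 0) +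
        SF h (filter (fun F => Nat.eqb (fd F) d) S))).
    + rewrite sum_plus, sum_ind, <- IH; [reflexivity| |].
      * intros F HF'; apply H; right; exact HF'.
      * apply H; left; reflexivity.
    + intros d _. simpl. destruct (Nat.eqb (fd a) d); simpl; ring.
Qed.

Definition maxfd (S : list (list tree)) : nat := fold_right (fun F m => Nat.max (fd F) m) 0%nat S.
Lemma maxfd_le S F : In F S -> (fd F <= maxfd S)%nat.
Proof. induction S; simpl; [tauto|]. intros [->|H]; [lia|]. specialize (IHS H). lia. Qed.

Lemma Rdiv_le_0_compat a b : 0 <= a -> 0 < b -> 0 <= a / b.
Proof. intros. unfold Rdiv. apply Rmult_le_pos; [lra|]. left; apply Rinv_0_lt_compat; lra. Qed.

Lemma sum_scal_l k f N : sum_f_R0 (fun d => k * f d) N = k * sum_f_R0 f N.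
Proof. rewrite scal_sum. apply sum_eq. intros; ring. Qed.

Section Main.
Variables (p : nat -> R) (mu : R) (g : nat -> R) (A : R).
Hypotheses (Hp0 : forall k, 0 <= p k) (Hs1 : forall K, sum_f_R0 p K <= 1)
  (Hsm : forall K, sum_f_R0 (fun k => INR k * p k) K <= mu) (Hmu1 : mu < 1)
  (Hg : forall k, 0 <= g k) (HA : forall K, sum_f_R0 (fun k => p k * g k) K <= A) (HA0 : 0 <= A).

Definition concl c S := SF (fw p) S <= 1 /\ SF (fun F => VF g F * fw p F) S <= INR c * A / (1 - mu).

Lemma case0 S : NoDup S -> (forall F, In F S -> length F = 0%nat) -> concl 0 S.
Proof.
  intros HS HF. unfold concl.
  destruct S as [|F S]; [simpl; unfold Rdiv; rewrite !Rmult_0_l; lra|].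
  assert (F = nil) by (apply length_zero_iff_nil, HF; left; reflexivity). subst.
  destruct S as [|G S].
  - simpl. unfold fw; simpl. unfold Rdiv; rewrite !Rmult_0_l. lra.
  - assert (G = nil) by (apply length_zero_iff_nil, HF; right; left; reflexivity). subst.
    inversion HS. exfalso. simpl in *. tauto.
Qed.

Lemma step n c Ss :
  (forall c Ss, NoDup Ss -> (forall F, In F Ss -> length F = c /\ (szF F <= n)%nat) -> concl c Ss) ->
  NoDup Ss -> (forall F, In F Ss -> length F = S c /\ (szF F <= S n)%nat) -> concl (S c) Ss.
Proof.
  intros IH HS HF.
  assert (Hq : 0 < 1 - mu) by lra.
  assert (HAq : 0 <= A / (1 - mu)) by (apply Rdiv_le_0_compat; lra).
  assert (Hne : forall F, In F Ss -> F <> nil).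
  { intros F H E. subst. destruct (HF _ H) as [H1 _]. discriminate. }
  set (K := maxfd Ss).
  set (L := fun d => filter (fun F => Nat.eqb (fd F) d) Ss).
  assert (HL : forall d F, In F (L d) -> In F Ss /\ fd F = d).
  { intros d F H. unfold L in H. apply filter_In in H. destruct H as [H1 H2].
    split; [exact H1|]. apply Nat.eqb_eq; exact H2. }
  assert (HIH : forall d, concl (d + S c - 1) (map T (L d))).
  { intros d. apply IH.
    - apply NoDup_map_NoDup_ForallPairs.
      + intros F G HFi HGi E. destruct (HL _ _ HFi) as [HF1 HF2]. destruct (HL _ _ HGi) as [HG1 HG2].
        apply T_inj; auto. congruence.
        destruct (HF _ HF1), (HF _ HG1). congruence.
      + apply NoDup_filter. exact HS.
    - intros F' HF'. apply in_map_iff in HF'. destruct HF' as [F [<- HFi]].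
      destruct (HL _ _ HFi) as [HF1 HF2]. destruct (HF _ HF1) as [Hl Hs].
      rewrite len_T by auto. rewrite sz_T in Hs by auto. split; lia. }
  assert (E1 : forall d, SF (fw p) (L d) = p d * SF (fw p) (map T (L d))).
  { intros d. rewrite SF_map, <- SF_scal. apply SF_ext. intros F HFi.
    destruct (HL _ _ HFi) as [HF1 HF2]. rewrite fw_T by auto. rewrite HF2. reflexivity. }
  assert (E2 : forall d, SF (fun F => VF g F * fw p F) (L d) =
     p d * (g d * SF (fw p) (map T (L d)) + SF (fun F => VF g F * fw p F) (map T (L d)))).
  { intros d. rewrite !SF_map, <- SF_scal, <- SF_plus, <- SF_scal. apply SF_ext. intros F HFi.
    destruct (HL _ _ HFi) as [HF1 HF2]. rewrite fw_T, VF_T by auto. rewrite HF2. ring. }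
  unfold concl. rewrite (decomp _ Ss K), (decomp (fun F => VF g F * fw p F) Ss K)
    by (intros F HFi; apply maxfd_le; exact HFi).
  unfold L in *. split.
  - apply Rle_trans with (sum_f_R0 p K); [|apply Hs1].
    apply sum_Rle. intros d _. rewrite E1. destruct (HIH d) as [H1 _].
    rewrite <- (Rmult_1_r (p d)) at 2. apply Rmult_le_compat_l; auto.
  - apply Rle_trans with (sum_f_R0 (fun d => p d * g d + (INR c * (A / (1 - mu))) * p d
        + A / (1 - mu) * (INR d * p d)) K).
    + apply sum_Rle. intros d _. rewrite E2. destruct (HIH d) as [H1 H2].
      replace (INR (d + S c - 1)) with (INR d + INR c) in H2
        by (replace (d + S c - 1)%nat with (d + c)%nat by lia; rewrite plus_INR; ring).
      apply Rle_trans with (p d * (g d * 1 + (INR d + INR c) * A / (1 - mu))).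
      * apply Rmult_le_compat_l; auto. apply Rplus_le_compat; auto.
        apply Rmult_le_compat_l; auto.
      * unfold Rdiv. right. ring.
    + rewrite !sum_plus.
      rewrite !sum_scal_l.
      pose proof (HA K). pose proof (Hs1 K). pose proof (Hsm K). pose proof (pos_INR c).
      assert (INR (S c) * A / (1 - mu) = A + INR c * (A / (1 - mu)) * 1 + A / (1 - mu) * mu)
        by (rewrite S_INR; field; lra).
      rewrite H3.
      apply Rplus_le_compat; [apply Rplus_le_compat; [exact H|]|].
      * apply Rmult_le_compat_l; [apply Rmult_le_pos; lra| exact H0].
      * apply Rmult_le_compat_l; [lra| exact H1].
Qed.

Lemma mainlem : forall n c Ss, NoDup Ss -> (forall F, In F Ss -> length F = c /\ (szF F <= n)%nat) ->
  concl c Ss.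
Proof.
  induction n as [|n IH]; intros c Ss HS HF.
  - destruct c as [|c]; [apply case0; auto; intros F H; apply HF; auto|].
    destruct Ss as [|F Ss].
    + unfold concl, SF; cbn [fold_right]. split; [lra|]. pose proof (pos_INR (S c)).
      apply Rdiv_le_0_compat; [apply Rmult_le_pos; lra|lra].
    + exfalso. destruct (HF F (or_introl eq_refl)) as [Hl Hs].
      destruct F; [discriminate|]. rewrite sz_T in Hs by discriminate. lia.
  - destruct c as [|c]; [apply case0; auto; intros F H; apply HF; auto|].
    apply (step n); auto.
Qed.
End Main.

Fixpoint tree_ind2 (P : tree -> Prop) (H : forall ts, Forall P ts -> P (Node ts)) (t : tree) : P t :=
  match t with Node ts => H ts ((fix f (l : list tree) : Forall P l :=
     match l with nil => Forall_nil P | t' :: l' => Forall_cons t' (tree_ind2 P H t') (f l') end) ts) end.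

Definition mdF (ts : list tree) : nat := fold_right (fun t m => Nat.max (maxdeg t) m) 0%nat ts.
Lemma maxdeg_node ts : maxdeg (Node ts) = Nat.max (length ts) (mdF ts).
Proof. simpl; f_equal; induction ts; simpl; try congruence. Qed.

Lemma szt_pos t : (1 <= szt t)%nat.
Proof. destruct t. rewrite szt_node. lia. Qed.

Lemma maxdeg_lt t : (maxdeg t < szt t)%nat.
Proof.
  induction t as [ts IH] using tree_ind2. rewrite maxdeg_node, szt_node.
  assert ((mdF ts <= szF ts)%nat /\ (length ts <= szF ts)%nat).
  { induction IH as [|t ts Ht Hts IHts]; simpl; [lia|].
    pose proof (szt_pos t). lia. }
  lia.
Qed.

Lemma V_nonneg g t : (forall k, 0 <= g k) -> 0 <= V g t.
Proof.
  intros Hg. induction t as [ts IH] using tree_ind2. rewrite V_node.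
  assert (0 <= VF g ts). { induction IH; simpl; [lra|]. lra. }
  specialize (Hg (length ts)). lra.
Qed.

Definition indr (r : nat) : nat -> R := fun d => if Nat.eqb d r then 1 else 0.
Lemma ind_nonneg r k : 0 <= indr r k.
Proof. unfold indr. destruct (Nat.eqb k r); lra. Qed.

Lemma maxdeg_V r t : maxdeg t = r -> 1 <= V (indr r) t.
Proof.
  induction t as [ts IH] using tree_ind2. rewrite maxdeg_node, V_node. intros Hm.
  assert (HVF : 0 <= VF (indr r) ts).
  { clear. induction ts; simpl; [lra|]. pose proof (V_nonneg (indr r) a (ind_nonneg r)). lra. }
  destruct (Nat.eq_dec (length ts) r) as [E|E].
  - unfold indr at 1. rewrite E, Nat.eqb_refl. lra.
  - assert (Hm' : mdF ts = r) by lia. pose proof (ind_nonneg r (length ts)).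
    enough (1 <= VF (indr r) ts) by lra.
    assert (Hne : ts <> nil) by (intro; subst; simpl in *; lia).
    clear Hm E HVF. revert Hm' Hne. induction IH as [|t ts Ht Hts IHts]; intros Hm' Hne; simpl in *.
    + congruence.
    + pose proof (V_nonneg (indr r) t (ind_nonneg r)).
      assert (0 <= VF (indr r) ts).
      { clear. induction ts; simpl; [lra|]. pose proof (V_nonneg (indr r) a (ind_nonneg r)). lra. }
      destruct (Nat.eq_dec (maxdeg t) r) as [E|E].
      * specialize (Ht E). lra.
      * assert (mdF ts = r) by lia. destruct ts; [simpl in *; lia|].
        assert (1 <= VF (indr r) (t0 :: ts)) by (apply IHts; [apply ind_nonneg|exact H2|discriminate]). lra.
Qed.

Lemma gw_nonneg p t : (forall k, 0 <= p k) -> 0 <= gw_weight p t.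
Proof.
  intros Hp. induction t as [ts IH] using tree_ind2. rewrite gw_node.
  apply Rmult_le_pos; auto. induction IH; unfold fw; simpl; [lra|].
  apply Rmult_le_pos; auto.
Qed.

Lemma partial_le f l K : infinite_sum f l -> (forall k, 0 <= f k) -> sum_f_R0 f K <= l.
Proof. intros H Hf. apply sum_incr; auto. Qed.

Lemma szt_le_szF t l : In t l -> (szt t <= szF l)%nat.
Proof. induction l; simpl; [tauto|]. intros [->|H]; [lia|]. specialize (IHl H). lia. Qed.

Lemma bound_lists p mu g A (f : tree -> R) l :
  (forall k, 0 <= p k) -> (forall K, sum_f_R0 p K <= 1) ->
  (forall K, sum_f_R0 (fun k => INR k * p k) K <= mu) -> mu < 1 ->
  (forall k, 0 <= g k) -> (forall K, sum_f_R0 (fun k => p k * g k) K <= A) -> 0 <= A ->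
  NoDup l -> (forall t, In t l -> f t <= V g t * gw_weight p t) ->
  lsum f l <= A / (1 - mu).
Proof.
  intros Hp0 Hs1 Hsm Hmu1 Hg HA HA0 Hl Hf.
  set (Ss := map (fun t => t :: nil) l).
  assert (Hc := mainlem p mu g A Hp0 Hs1 Hsm Hmu1 Hg HA HA0 (szF l) 1 Ss).
  destruct Hc as [_ Hc].
  - apply NoDup_map_NoDup_ForallPairs; [|exact Hl]. intros x y _ _ E. congruence.
  - intros F HF. unfold Ss in HF. apply in_map_iff in HF. destruct HF as [t [<- Ht]].
    split; [reflexivity|]. simpl. pose proof (szt_le_szF t l Ht). lia.
  - replace (A / (1 - mu)) with (INR 1 * A / (1 - mu)) by (simpl; field; lra).
    eapply Rle_trans; [|exact Hc]. unfold Ss. clear Hc Ss Hl.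
    induction l as [|t l IH]; simpl; [lra|].
    apply Rplus_le_compat.
    + unfold fw; simpl. rewrite Rplus_0_r, Rmult_1_r. apply Hf; left; reflexivity.
    + apply IH. intros; apply Hf; right; auto.
Qed.

Lemma lub_of (E : R -> Prop) b : E 0 -> (forall x, E x -> x <= b) -> exists x, is_lub E x /\ x <= b.
Proof.
  intros H0 Hb. destruct (completeness E) as [m Hm].
  - exists b. intros x Hx. apply Hb, Hx.
  - exists 0; exact H0.
  - exists m. split; [exact Hm|]. apply Hm. intros x Hx. apply Hb, Hx.
Qed.

Theorem mainTheorem7 (p : nat -> R) (mu : R)
  (Hp : offspring_dist p mu) (Hmu0 : 0 < mu) (Hmu1 : mu < 1) :
  (forall r : nat, (1 <= r)%nat ->
     exists x, prob_M_eq p r x /\ x <= p r / (1 - mu)) /\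
  (exists e, expect_M p e).
Proof.
  destruct Hp as [Hp0 [Hs Hm]].
  assert (Hs1 : forall K, sum_f_R0 p K <= 1) by (intros; apply partial_le; auto).
  assert (Hsm : forall K, sum_f_R0 (fun k => INR k * p k) K <= mu).
  { intros; apply partial_le; auto. intros k. apply Rmult_le_pos; [apply pos_INR|auto]. }
  split.
  - intros r _. apply lub_of.
    + exists nil. split; [constructor|]. split; [simpl; tauto|reflexivity].
    + intros x [l [Hl [Ht ->]]].
      apply (bound_lists p mu (indr r) (p r)); auto.
      * apply ind_nonneg.
      * intros K. rewrite (sum_eq _ (fun d => if Nat.eqb r d then p r else 0)).
        -- destruct (le_lt_dec r K).
           ++ rewrite sum_ind by auto. lra.
           ++ rewrite sum_ind0 by auto. auto.
        -- intros d _. unfold indr. destruct (Nat.eqb_spec d r), (Nat.eqb_spec r d); subst;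
           try ring; congruence.
      * intros t Hin. pose proof (maxdeg_V r t (Ht t Hin)). pose proof (gw_nonneg p t Hp0).
        rewrite <- (Rmult_1_l (gw_weight p t)) at 1. apply Rmult_le_compat_r; auto.
  - destruct (lub_of (fun x => exists l, NoDup l /\ (forall t, In t l -> True) /\
         x = lsum (fun t => INR (maxdeg t) * gw_weight p t) l) (1 / (1 - mu))) as [e [He _]].
    + exists nil. split; [constructor|]. split; [simpl; tauto|reflexivity].
    + intros x [l [Hl [Ht ->]]].
      apply (bound_lists p mu (fun _ => 1) 1); auto.
      * intros; lra.
      * intros K. rewrite (sum_eq _ p) by (intros; ring). auto.
      * lra.
      * intros t _. apply Rmult_le_compat_r; [apply gw_nonneg; auto|].
        assert (V (fun _ => 1) t = INR (szt t)).
        { induction t as [ts IH] using tree_ind2. rewrite V_node, szt_node, S_INR.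
          assert (VF (fun _ => 1) ts = INR (szF ts)).
          { induction IH; simpl; [reflexivity|]. rewrite plus_INR. congruence. }
          rewrite H. simpl. ring. }
        rewrite H. apply le_INR. pose proof (maxdeg_lt t). lia.
    + exists e. exact He.
Qed.
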